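(* Let $x_1,\dots,x_N\in S^2\times H$ be the points of a point cloud, represented by $f(x)=\frac{1}{N}\sum_{i=1}^N\delta(x-x_i)$, and let $\psi: S^2\times H\to\mathbb{R}$ satisfy $\psi(Z(\theta)x)=\psi(x)$ for all $x\in S^2\times H$ and all angles $\theta$. Define the sparse correlation at the point $x_j$ by $$[\psi\ast f](x_j)=\int_{S^2\times H}\psi(\mathcal{T}(x_j)^{-1}x)f(x)\,dx=\frac{1}{N}\sum_{i=1}^N\psi(\mathcal{T}(x_j)^{-1}x_i).$$ Then for every $Q\in SO(3)$ and every $j$, $[\psi\ast L_Qf](Qx_j)=[\psi\ast f](x_j)$, where $L_Qf(x)=f(Q^{-1}x)$ is the rotated point cloud $\frac1N\sum_i\delta(x-Qx_i)$; explicitly, $$\frac{1}{N}\sum_{i=1}^N\psi(\mathcal{T}(Qx_j)^{-1}Qx_i)=\frac{1}{N}\sum_{i=1}^N\psi(\mathcal{T}(x_j)^{-1}x_i).$$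
   Context: $Z(\theta)$, $Y(\theta)$ are the rotation matrices about the $z$- and $y$-axes by angle $\theta$; $n=(0,0,1)^T$; points of $S^2$ are $s(\alpha,\beta)=Z(\alpha)Y(\beta)n$ with $\alpha\in[0,2\pi]$, $\beta\in[0,\pi]$; $H=[0,1]$; a point of $S^2\times H$ is $(s,h)$ (direction and radial distance of a point of the unit ball). A rotation $Q\in SO(3)$ acts on $S^2\times H$ by $Q(s,h)=(Qs,h)$. The map $\mathcal{T}: S^2\times H\to SO(3)$ is $\mathcal{T}(s(\alpha,\beta),h)=Z(\alpha)Y(\beta)Z(2\pi h)$. $\delta$ is the Dirac delta. *)

(* Defs.v *)
From HB Require Import structures.
From mathcomp Require Import all_boot all_order all_algebra.
From mathcomp Require Import all_classical all_reals all_analysis.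
Set Implicit Arguments. Unset Strict Implicit. Unset Printing Implicit Defensive.
Import Order.TTheory GRing.Theory Num.Theory.
Local Open Scope ring_scope.

Definition Zrot (R : realType) (t : R) : 'M[R]_3 :=
  \matrix_(i < 3, j < 3)
    nth 0 (nth [::] [:: [:: cos t; - sin t; 0];
                       [:: sin t;   cos t; 0];
                       [:: 0;       0;     1]] i) j.

Definition Yrot (R : realType) (t : R) : 'M[R]_3 :=
  \matrix_(i < 3, j < 3)
    nth 0 (nth [::] [:: [:: cos t;   0; sin t];
                       [:: 0;       1; 0];
                       [:: - sin t; 0; cos t]] i) j.

Definition npole (R : realType) : 'cV[R]_3 := \col_(i < 3) (i == 2%N :> nat)%:R.

Definition pt (R : realType) := ('cV[R]_3 * R)%type.

Definition on_S2 (R : realType) (s : 'cV[R]_3) : Prop := (s^T *m s) = 1%:M.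
Definition in_S2H (R : realType) (x : pt R) : Prop := on_S2 x.1 /\ 0 <= x.2 <= 1.

Definition is_SO3 (R : realType) (Q : 'M[R]_3) : Prop :=
  Q^T *m Q = 1%:M /\ \det Q = 1.

Definition act (R : realType) (Q : 'M[R]_3) (x : pt R) : pt R := (Q *m x.1, x.2).

Definition sph_coords (R : realType) (sph : 'cV[R]_3 -> R * R) : Prop :=
  forall s, on_S2 s ->
    [/\ 0 <= (sph s).1 <= 2 * pi, 0 <= (sph s).2 <= pi &
        s = Zrot (sph s).1 *m Yrot (sph s).2 *m npole R].

Definition Tmap (R : realType) (sph : 'cV[R]_3 -> R * R) (x : pt R) : 'M[R]_3 :=
  Zrot (sph x.1).1 *m Yrot (sph x.1).2 *m Zrot (2 * pi * x.2).

Definition sparse_corr (R : realType) (sph : 'cV[R]_3 -> R * R) (N : nat)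
  (psi : pt R -> R) (xs : 'I_N -> pt R) (y : pt R) : R :=
  N%:R^-1 * \sum_(i < N) psi (act (invmx (Tmap sph y)) (xs i)).

(* Main.v *)
Require Import Defs.
From HB Require Import structures.
From mathcomp Require Import all_boot all_order all_algebra.
From mathcomp Require Import all_classical all_reals all_analysis.
From mathcomp Require Import ring lra.
Import Order.TTheory GRing.Theory Num.Theory.
Local Open Scope ring_scope.
Set Implicit Arguments. Unset Strict Implicit.

Lemma det3 (R : comNzRingType) (A : 'M[R]_3) : \det A =
  A 0 0 * (A 1 1 * A 2 2 - A 1 2 * A 2 1)
 - A 0 1 * (A 1 0 * A 2 2 - A 1 2 * A 2 0)
 + A 0 2 * (A 1 0 * A 2 1 - A 1 1 * A 2 0).
Proof.
rewrite (expand_det_row _ 0) !big_ord_recl big_ord0 /= /cofactor.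
rewrite !(expand_det_row _ 0) !big_ord_recl !big_ord0 /= /cofactor.
rewrite !det_mx11 !mxE /=.
rewrite !expr0 !expr1 /= -[(-1) ^+ 2]/((-1) * (-1)).
pose B (i j : nat) : R := A (inord i) (inord j).
have E : forall i j : 'I_3, A i j = B i j by move=> i j; rewrite /B !inord_val.
rewrite !E /=.
clearbody B.
ring.
Qed.

Lemma mul3E (R : comNzRingType) m n (A : 'M[R]_(m,3)) (C : 'M[R]_(3,n)) i j :
  (A *m C) i j = A i 0 * C 0 j + A i 1 * C 1 j + A i 2 * C 2 j.
Proof.
rewrite mxE !big_ord_recl big_ord0 /=.
pose B (k : nat) : R := A i (inord k).
pose D (k : nat) : R := C (inord k) j.
have E : forall k : 'I_3, A i k = B k by move=> k; rewrite /B !inord_val.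
have F : forall k : 'I_3, C k j = D k by move=> k; rewrite /D !inord_val.
rewrite !E !F /=.
clearbody B D.
ring.
Qed.

Definition ortho {R : realType} (M : 'M[R]_3) := M^T *m M = 1%:M.

Lemma ortho_mul (R : realType) (A B : 'M[R]_3) : ortho A -> ortho B -> ortho (A *m B).
Proof.
rewrite /ortho => hA hB; rewrite trmx_mul mulmxA -(mulmxA B^T) hA mulmx1 //.
Qed.

Lemma ortho_tr (R : realType) (A : 'M[R]_3) : ortho A -> A *m A^T = 1%:M.
Proof. by move/mulmx1C. Qed.

Lemma ortho_inv (R : realType) (A : 'M[R]_3) : ortho A -> invmx A = A^T.
Proof.
move=> h.
have u : A \in unitmx.
  by rewrite unitmxE; apply/unitrP; exists (\det A^T); rewrite mulrC -det_mulmx (ortho_tr h) det1.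
by rewrite -[A^T]mulmx1 -(mulmxV u) mulmxA h mul1mx.
Qed.

Ltac mx3 := apply/matrixP => - [[|[|[|//]]] ?] [[|[|[|//]]] ?];
   rewrite ?mul3E !mxE /=.

Lemma ortho_Z (R : realType) (t : R) : ortho (Zrot t).
Proof. rewrite /ortho; mx3; rewrite ?mxE /=; have := cos2Dsin2 t; nra. Qed.
Lemma ortho_Y (R : realType) (t : R) : ortho (Yrot t).
Proof. rewrite /ortho; mx3; rewrite ?mxE /=; have := cos2Dsin2 t; nra. Qed.
Lemma det_Z (R : realType) (t : R) : \det (Zrot t) = 1.
Proof. rewrite det3 !mxE /=; have := cos2Dsin2 t; nra. Qed.
Lemma det_Y (R : realType) (t : R) : \det (Yrot t) = 1.
Proof. rewrite det3 !mxE /=; have := cos2Dsin2 t; nra. Qed.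
Lemma Z_comm (R : realType) (a b : R) : Zrot a *m Zrot b = Zrot b *m Zrot a.
Proof. mx3; rewrite ?mxE /=; ring. Qed.

Lemma trig_ex (R : realType) (c s : R) : c ^+ 2 + s ^+ 2 = 1 ->
  exists t : R, cos t = c /\ sin t = s.
Proof.
move=> h.
have hc : -1 <= c <= 1.
  have : c ^+ 2 <= 1 by rewrite -h lerDl sqr_ge0.
  by move=> H; apply/andP; split; nra.
have hs : sin (acos c) = `|s|.
  by rewrite sin_acos // -h addrC addKr sqrtr_sqr.
have hcc : cos (acos c) = c by rewrite acosK // in_itv.
case: (lerP 0 s) => hs0.
  by exists (acos c); rewrite hcc hs ger0_norm.
exists (- acos c); rewrite cosN sinN hcc hs ltr0_norm // opprK; split => //.
Qed.

Lemma ord3_all (P : 'I_3 -> Prop) : P 0 -> P 1 -> P 2 -> forall i, P i.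
Proof.
move=> h0 h1 h2 [[|[|[|//]]] p].
- by have -> : Ordinal p = 0 by apply/val_inj.
- by have -> : Ordinal p = 1 by apply/val_inj.
- by have -> : Ordinal p = 2 by apply/val_inj.
Qed.

Lemma fixn (R : realType) (K : 'M[R]_3) : ortho K -> \det K = 1 ->
  K *m npole R = npole R -> exists t, K = Zrot t.
Proof.
move=> hO hD hN.
have hO' := ortho_tr hO.
have e i j : (K^T *m K) i j = (1%:M : 'M[R]_3) i j by rewrite hO.
have e' i j : (K *m K^T) i j = (1%:M : 'M[R]_3) i j by rewrite hO'.
have en i : (K *m npole R) i 0 = npole R i 0 by rewrite hN.
move: (en 0) (en 1) (en 2); rewrite !mul3E !mxE /= => n0 n1 n2.
rewrite !mulr0 !mulr1 !add0r in n0 n1 n2.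
move: (e 0 0) (e 1 1) (e 0 1) (e' 2 2); rewrite !mul3E !mxE /= => h00 h11 h01 h22.
rewrite det3 in hD.
have k20 : K 2 0 = 0 by nra.
have k21 : K 2 1 = 0 by nra.
have hc : K 0 0 ^+ 2 + K 1 0 ^+ 2 = 1 by nra.
have [t [ct st]] := trig_ex hc.
rewrite n0 n1 n2 k20 k21 in hD h11 h01.
have sq : (K 0 1 + K 1 0) ^+ 2 + (K 1 1 - K 0 0) ^+ 2 = 0 by nra.
move/eqP: sq; rewrite paddr_eq0 ?sqr_ge0 // !sqrf_eq0 => /andP[/eqP a /eqP b].
have k11 : K 1 1 = K 0 0 by apply/eqP; rewrite -subr_eq0 b.
have k01 : K 0 1 = - K 1 0 by apply/eqP; rewrite -addr_eq0 a.
exists t; apply/matrixP; apply: ord3_all; apply: ord3_all; rewrite !mxE /= ?ct ?st //.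
Qed.

Lemma ortho_S2 (R : realType) (M : 'M[R]_3) (s : 'cV[R]_3) : ortho M -> on_S2 s -> on_S2 (M *m s).
Proof. by rewrite /on_S2 => hM hs; rewrite trmx_mul mulmxA -(mulmxA s^T) hM mulmx1. Qed.

Theorem theorem4 (R : realType) (sph : 'cV[R]_3 -> R * R)
  (Hsph : sph_coords sph) (N : nat) (xs : 'I_N -> pt R)
  (Hxs : forall i, in_S2H (xs i)) (psi : pt R -> R)
  (Hpsi : forall (x : pt R) (theta : R), in_S2H x ->
            psi (act (Zrot theta) x) = psi x)
  (Q : 'M[R]_3) (HQ : is_SO3 Q) (j : 'I_N) :
  sparse_corr sph psi (fun i => act Q (xs i)) (act Q (xs j)) =
  sparse_corr sph psi xs (xs j).
Proof.
case: HQ => HQo HQd.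
have [hy _] := Hxs j.
have hQy : on_S2 (Q *m (xs j).1) by apply: ortho_S2.
have [_ _ eA] := Hsph _ hy.
have [_ _ eA'] := Hsph _ hQy.
set A := Zrot (sph (xs j).1).1 *m Yrot (sph (xs j).1).2 in eA.
set A' := Zrot (sph (Q *m (xs j).1)).1 *m Yrot (sph (Q *m (xs j).1)).2 in eA'.
set W := Zrot (2 * pi * (xs j).2).
have oA : ortho A by apply: ortho_mul; [apply: ortho_Z | apply: ortho_Y].
have oA' : ortho A' by apply: ortho_mul; [apply: ortho_Z | apply: ortho_Y].
have oW : ortho W by apply: ortho_Z.
have eT : Tmap sph (xs j) = A *m W by [].
have eT' : Tmap sph (act Q (xs j)) = A' *m W by [].
set K := A'^T *m Q *m A.
have oAt : ortho A'^T by rewrite /ortho trmxK; apply: ortho_tr.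
have oK : ortho K by apply: ortho_mul => //; apply: ortho_mul.
have dK : \det K = 1.
  by rewrite !det_mulmx det_tr HQd !det_mulmx !det_Z !det_Y !mulr1.
have nK : K *m npole R = npole R.
  by rewrite /K -mulmxA -eA -mulmxA eA' mulmxA oA' mul1mx.
have [th eK] := fixn oK dK nK.
have key : (A' *m W)^T *m Q = Zrot th *m (A *m W)^T.
  have e1 : A'^T *m Q = Zrot th *m A^T.
    by rewrite -eK /K -(mulmxA _ A) (ortho_tr oA) mulmx1.
  have e2 : W^T *m Zrot th = Zrot th *m W^T.
    by rewrite -[W^T *m _]mulmx1 -(ortho_tr oW) !mulmxA -(mulmxA W^T) /W Z_comm -/W mulmxA oW mul1mx.
  by rewrite (trmx_mul A' W) (trmx_mul A W) -(mulmxA W^T) e1 mulmxA e2 mulmxA.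
rewrite /sparse_corr; congr (_ * _); apply: eq_bigr => i _.
rewrite eT eT' !ortho_inv; try by apply: ortho_mul.
have [hi1 hi2] := Hxs i.
rewrite -[RHS](Hpsi _ th); last first.
  by split => //=; apply: ortho_S2 => //; rewrite /ortho trmxK; apply: ortho_tr; apply: ortho_mul.
by rewrite /act /= mulmxA key mulmxA.
Qed.
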